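(* Let $\mathbf A=(\mathbf a_1,\ldots,\mathbf a_m)^\top\in\mathbb R^{m\times d}$ and $\mathbf b=(b_1,\ldots,b_m)^\top\in\mathbb R^m$. Then the following are equivalent: (A) $(\mathbf A,\mathbf b)$ is affine phase retrievable for $\mathbb R^d$. (B) The map $\mathbf M^2_{\mathbf A,\mathbf b}$ is injective on $\mathbb R^d$. (C) For any $\mathbf u,\mathbf v\in\mathbb R^d$ with $\mathbf u\neq 0$, there exists $k$ with $1\le k\le m$ such that $\langle \mathbf a_k,\mathbf u\rangle(\langle \mathbf a_k,\mathbf v\rangle+b_k)\neq 0$. (D) For any $S\subset\{1,\ldots,m\}$, if $\mathbf b_S\in\mathrm{span}(\mathbf A_S)$ then $\mathrm{span}(\mathbf A_{S^c}^\top)=\mathrm{span}\{\mathbf a_j: j\in S^c\}=\mathbb R^d$. (E) The Jacobian $J(\mathbf x)$ of the map $\mathbf M^2_{\mathbf A,\mathbf b}$ has rank $d$ for all $\mathbf x\in\mathbb R^d$.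
   Context: For $\mathbf A=(\mathbf a_1,\ldots,\mathbf a_m)^\top$ and $\mathbf b$, define $\mathbf M_{\mathbf A,\mathbf b}(\mathbf x)=(|\langle\mathbf a_1,\mathbf x\rangle+b_1|,\ldots,|\langle\mathbf a_m,\mathbf x\rangle+b_m|)$ and $\mathbf M^2_{\mathbf A,\mathbf b}(\mathbf x)=(|\langle\mathbf a_1,\mathbf x\rangle+b_1|^2,\ldots,|\langle\mathbf a_m,\mathbf x\rangle+b_m|^2)$, where $\langle\cdot,\cdot\rangle$ is the standard inner product. $(\mathbf A,\mathbf b)$ is called affine phase retrievable for $\mathbb R^d$ if $\mathbf M_{\mathbf A,\mathbf b}$ is injective on $\mathbb R^d$. For $T\subset\{1,\ldots,m\}$, $\mathbf A_T=(\mathbf a_j:j\in T)^\top$ is the submatrix of rows indexed by $T$, $\mathbf b_T$ the subvector of entries indexed by $T$, $S^c$ the complement of $S$ in $\{1,\ldots,m\}$, and for a matrix $\mathbf B$, $\mathrm{span}(\mathbf B)$ is the span of its columns (so $\mathrm{span}(\mathbf A_T)\subset\mathbb R^{\#T}$). *)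

(* Defs.v *)
From HB Require Import structures.
From mathcomp Require Import all_boot all_order all_algebra.
From mathcomp Require Import all_classical all_reals all_analysis.
Set Implicit Arguments. Unset Strict Implicit. Unset Printing Implicit Defensive.
Import Order.TTheory GRing.Theory Num.Theory.
Import numFieldNormedType.Exports.
Local Open Scope ring_scope.

(* A : 'M_(m,d) has rows a_1..a_m; b : 'rV_m; points x : 'rV_d. *)
Definition affv (R : realType) (m d : nat) (A : 'M[R]_(m, d)) (b : 'rV[R]_m)
  (x : 'rV[R]_d) (k : 'I_m) : R :=
  \sum_(j < d) A k j * x 0 j + b 0 k.

Definition Mab (R : realType) (m d : nat) (A : 'M[R]_(m, d)) (b : 'rV[R]_m)
  (x : 'rV[R]_d) : 'rV[R]_m := \row_k `|affv A b x k|.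

Definition M2ab (R : realType) (m d : nat) (A : 'M[R]_(m, d)) (b : 'rV[R]_m)
  (x : 'rV[R]_d) : 'rV[R]_m := \row_k (`|affv A b x k| ^+ 2).

Definition affine_phase_retrievable (R : realType) (m d : nat)
  (A : 'M[R]_(m, d)) (b : 'rV[R]_m) : Prop := injective (Mab A b).

(* Main.v *)
Require Import Defs.
From HB Require Import structures.
From mathcomp Require Import all_boot all_order all_algebra.
From mathcomp Require Import all_classical all_reals all_analysis.
From mathcomp Require Import ring lra.
Import Order.TTheory GRing.Theory Num.Theory.
Import numFieldNormedType.Exports.
Set Implicit Arguments. Unset Strict Implicit. Unset Printing Implicit Defensive.
Local Open Scope ring_scope.

Section D.
Variable R : realType.

Lemma is_diff_sum' (V W : normedModType R) n (f df : 'I_n -> V -> W) x :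
  (forall i, is_diff x (f i) (df i)) -> is_diff x (\sum_i f i) (\sum_i df i).
Proof.
move=> H; elim/big_ind2: _ => //.
- exact: (is_diff_cst (0 : W) x).
- by move=> ? ? ? ? ? ?; exact: is_diffD.
Qed.

Lemma is_diffZl' (V W : normedModType R) (k dk : V -> R) (c : W) x :
  is_diff x k dk -> is_diff x (fun z => k z *: c) (fun z => dk z *: c).
Proof.
move=> H; apply: DiffDef.
  by apply: differentiableZl; exact: ex_diff.
by rewrite diffZl ?diff_val //; exact: ex_diff.
Qed.

Lemma is_diff_coord d j (x : 'rV[R]_d) :
  is_diff x (fun N : 'rV[R]_d => N 0 j) (fun N => N 0 j).
Proof.
have @f : {linear 'rV[R]_d -> R}.
  by exists (fun N : 'M[R]_(_, _) => N 0 j); do 2![eexists]; do ?[constructor];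
     rewrite ?mxE// => ? *; rewrite ?mxE//; move=> ?; rewrite !mxE.
rewrite (_ : (fun _ => _) = f) //.
apply: DiffDef; first exact/linear_differentiable/coord_continuous.
by rewrite diff_lin //; exact: coord_continuous.
Qed.

Definition lin m d (A : 'M[R]_(m, d)) (x : 'rV[R]_d) k := \sum_(j < d) A k j * x 0 j.

Lemma is_diff_affv m d (A : 'M[R]_(m, d)) b k x :
  is_diff x (fun y => affv A b y k) (fun h => lin A h k).
Proof.
have -> : (fun y => affv A b y k) =
   \sum_j (A k j *: (fun N : 'rV[R]_d => N 0 j)) + cst (b 0 k).
  by apply/funext => y; rewrite /affv addrfctE fct_sumE.
have -> : (fun h => lin A h k) =
   \sum_j (A k j *: (fun N : 'rV[R]_d => N 0 j)) + 0.
  by apply/funext => y; rewrite /lin addrfctE fct_sumE /= addr0.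
apply: is_diffD.
apply: is_diff_sum' => j; apply: is_diffZ; exact: is_diff_coord.
Qed.

Lemma is_diff_M2 m d (A : 'M[R]_(m, d)) b x :
  is_diff x (M2ab A b) (fun h => \row_k (2 * affv A b x k * lin A h k)).
Proof.
have -> : M2ab A b = \sum_k (fun y => (affv A b y k * affv A b y k) *: (delta_mx 0 k : 'rV[R]_m)).
  apply/funext => y; rewrite fct_sumE; apply/rowP => i.
  rewrite /M2ab mxE summxE (bigD1 i) //= big1 ?addr0.
    by rewrite !mxE !eqxx mulr1 real_normK // num_real.
  by move=> k ki; rewrite !mxE eqxx /= [i == k]eq_sym (negbTE ki) mulr0.
have -> : (fun h => \row_k (2 * affv A b x k * lin A h k)) =
   \sum_k (fun h => (affv A b x k * lin A h k + affv A b x k * lin A h k) *: (delta_mx 0 k : 'rV[R]_m)).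
  apply/funext => y; rewrite fct_sumE; apply/rowP => i.
  rewrite mxE summxE (bigD1 i) //= big1 ?addr0.
    by rewrite !mxE !eqxx mulr1; ring.
  by move=> k ki; rewrite !mxE eqxx /= [i == k]eq_sym (negbTE ki) mulr0.
apply: is_diff_sum' => k.
apply: is_diffZl'.
have H := is_diffM (is_diff_affv A b k x) (is_diff_affv A b k x).
apply: is_diff_eq H _.
by apply/funext => h; rewrite addrfctE /=.
Qed.

Section Main.
Variables (m d : nat) (A : 'M[R]_(m, d)) (b : 'rV[R]_m).

Lemma affvE x k : affv A b x k = lin A x k + b 0 k.
Proof. by []. Qed.

Lemma linD x y k : lin A (x + y) k = lin A x k + lin A y k.
Proof. by rewrite /lin -big_split; apply: eq_bigr => j _; rewrite mxE mulrDr. Qed.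

Lemma linZ c x k : lin A (c *: x) k = c * lin A x k.
Proof. by rewrite /lin mulr_sumr; apply: eq_bigr => j _; rewrite mxE mulrCA. Qed.

Lemma linN x k : lin A (- x) k = - lin A x k.
Proof. by rewrite -scaleN1r linZ mulN1r. Qed.

Lemma linB x y k : lin A (x - y) k = lin A x k - lin A y k.
Proof. by rewrite linD linN. Qed.

Lemma row_freeE p q (M : 'M[R]_(p, q)) :
  row_free M <-> (forall v : 'rV[R]_p, v *m M = 0 -> v = 0).
Proof.
split; last exact: inj_row_free.
by move=> fM v /eqP; rewrite mulmx_free_eq0 // => /eqP.
Qed.

Definition CC := forall u v : 'rV[R]_d, u != 0 ->
  exists k : 'I_m, (\sum_(j < d) A k j * u 0 j) * affv A b v k != 0.

Lemma ex_or_all (P : 'I_m -> R) :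
  (exists k, P k != 0) \/ (forall k, P k = 0).
Proof.
case: (boolP [exists k, P k != 0]) => [/existsP|/existsPn H]; first by left.
by right => k; apply/eqP; rewrite -[P k == 0]negbK H.
Qed.

Lemma A_C : affine_phase_retrievable A b <-> CC.
Proof.
split.
- move=> inj u v u0.
  case: (ex_or_all (fun k => lin A u k * affv A b v k)) => // H.
  exfalso; move: u0; apply/negP; rewrite negbK.
  have : Mab A b (v + u) = Mab A b (v - u).
    apply/rowP => k; rewrite !mxE !affvE linD linB.
    have := H k; rewrite affvE => /eqP; rewrite mulf_eq0 => /orP[] /eqP e.
      by rewrite e addr0 subr0.
    have -> : lin A v k + lin A u k + b 0 k = (lin A v k + b 0 k) + lin A u k by ring.
    have -> : lin A v k - lin A u k + b 0 k = (lin A v k + b 0 k) - lin A u k by ring.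
    by rewrite e add0r sub0r normrN.
  move=> /inj /eqP; rewrite -subr_eq0.
  have -> : v + u - (v - u) = (2%:R : R) *: u.
    by rewrite scaler_nat mulr2n opprB addrC addrA subrK.
  by rewrite scaler_eq0 pnatr_eq0.
- move=> C x y Mxy.
  apply/eqP; rewrite -subr_eq0; apply/negPn/negP => xy0.
  have [k] := C (x - y) (2^-1 *: (x + y)) xy0.
  apply/negP; rewrite negbK.
  have := congr1 (fun r : 'rV[R]_m => r 0 k) Mxy; rewrite !mxE => e.
  have e2 : affv A b x k ^+ 2 = affv A b y k ^+ 2.
    by rewrite -[LHS]real_normK ?num_real // -[RHS]real_normK ?num_real // e.
  move: e2; rewrite !affvE => e2.
  rewrite -/(lin A (x - y) k) linB linZ linD; apply/eqP.
  have -> : (lin A x k - lin A y k) * (2^-1 * (lin A x k + lin A y k) + b 0 k)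
     = 2^-1 * ((lin A x k + b 0 k) ^+ 2 - (lin A y k + b 0 k) ^+ 2).
    by field.
  by rewrite e2 subrr mulr0.
Qed.


Lemma A_B : affine_phase_retrievable A b <-> injective (M2ab A b).
Proof.
split=> inj x y e; apply: inj.
- apply/rowP => k; have := congr1 (fun r : 'rV[R]_m => r 0 k) e; rewrite !mxE => /eqP.
  by rewrite eqrXn2 // => /eqP.
- by apply/rowP => k; have := congr1 (fun r : 'rV[R]_m => r 0 k) e; rewrite !mxE => ->.
Qed.

Lemma C_E : CC <-> (forall x : 'rV[R]_d, \rank (jacobian (M2ab A b) x) = d).
Proof.
have JE : forall x (v : 'rV[R]_d), v *m jacobian (M2ab A b) x
    = \row_k (2 * affv A b x k * lin A v k).
  move=> x v; rewrite /jacobian mul_rV_lin1.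
  by rewrite (@diff_val _ _ _ _ _ _ _ (is_diff_M2 A b x)).
split.
- move=> C x; apply/eqP; apply/row_freeE => v.
  rewrite JE => v0; apply/eqP; apply/negP => /negP /(C v x) [k].
  have := congr1 (fun r : 'rV[R]_m => r 0 k) v0; rewrite !mxE => e.
  apply/negP; rewrite negbK; apply/eqP.
  move: e => /eqP; rewrite mulf_eq0 mulf_eq0 pnatr_eq0 /= => /orP[] /eqP e.
    by rewrite e mulr0.
  by rewrite -/(lin A v k) e mul0r.
- move=> E u v u0.
  case: (ex_or_all (fun k => lin A u k * affv A b v k)) => // H.
  exfalso; move: u0; apply/negP; rewrite negbK; apply/eqP.
  move/eqP: (E v) => /row_freeE; apply; rewrite JE; apply/rowP => k.
  by rewrite !mxE -mulrA [affv _ _ _ _ * _]mulrC H mulr0.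
Qed.

Definition MS (S : {set 'I_m}) := \matrix_(i < m) (if i \in S then 0 else row i A).

Lemma MS_tr S (u : 'rV[R]_d) k :
  (u *m (MS S)^T) 0 k = if k \in S then 0 else lin A u k.
Proof.
rewrite mxE /lin; case: ifP => kS.
  by apply: big1 => j _; rewrite !mxE kS mxE mulr0.
by apply: eq_bigr => j _; rewrite !mxE kS !mxE mulrC.
Qed.

Lemma C_D : CC <-> (forall S : {set 'I_m},
           (exists y : 'cV[R]_d, forall i, i \in S -> b 0 i = (A *m y) i 0) ->
           row_full (\matrix_(i < m) (if i \in S then 0 else row i A))).
Proof.
split.
- move=> C S [y Hy]; rewrite -/(MS S) /row_full -mxrank_tr.
  apply/row_freeE => u uM; apply/eqP; apply/negP => /negP /(C u (- y^T)) [k].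
  apply/negP; rewrite negbK; apply/eqP.
  have := congr1 (fun r : 'rV[R]_m => r 0 k) uM; rewrite MS_tr mxE.
  case: ifP => kS e.
    have -> : affv A b (- y^T) k = 0; last by rewrite mulr0.
    rewrite affvE linN Hy // mxE /lin; rewrite addrC; apply/eqP; rewrite subr_eq0; apply/eqP.
    by apply: eq_bigr => j _; rewrite !mxE.
  by rewrite -/(lin A u k) e mul0r.
- move=> D u v u0.
  case: (ex_or_all (fun k => lin A u k * affv A b v k)) => // H.
  exfalso; move: u0; apply/negP; rewrite negbK; apply/eqP.
  pose S := [set k | affv A b v k == 0].
  have : row_full (MS S).
    apply: D; exists (- v^T) => i; rewrite inE => /eqP e.
    have -> : (A *m - v^T) i 0 = - lin A v i.
      by rewrite mxE /lin -sumrN; apply: eq_bigr => j _; rewrite !mxE mulrN.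
    by move: e; rewrite affvE => e; apply/eqP; rewrite -subr_eq0 opprK addrC e.
  rewrite /row_full -mxrank_tr => /row_freeE; apply; apply/rowP => k.
  rewrite MS_tr mxE inE; case: ifP => // /negbT ak.
  by have /eqP := H k; rewrite mulf_eq0 (negbTE ak) orbF => /eqP.
Qed.

End Main.
End D.

Theorem theorem2p1 (R : realType) (m d : nat) (A : 'M[R]_(m, d)) (b : 'rV[R]_m) :
  [/\ (affine_phase_retrievable A b <-> injective (M2ab A b)),
      (affine_phase_retrievable A b <->
        (forall u v : 'rV[R]_d, u != 0 ->
           exists k : 'I_m, (\sum_(j < d) A k j * u 0 j) * affv A b v k != 0)),
      (affine_phase_retrievable A b <->
        (forall S : {set 'I_m},
           (exists y : 'cV[R]_d, forall i, i \in S -> b 0 i = (A *m y) i 0) ->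
           row_full (\matrix_(i < m) (if i \in S then 0 else row i A))))
    & (affine_phase_retrievable A b <->
        (forall x : 'rV[R]_d, \rank (jacobian (M2ab A b) x) = d))].
Proof.
have AC := A_C A b.
split.
- exact: A_B.
- exact: AC.
- by rewrite -C_D.
- by rewrite -C_E.
Qed.
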